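(* Let $\Sigma$ be a finite alphabet and $w = w[1]w[2]\cdots w[n] \in \Sigma^*$ with $n \ge 1$. Algorithm A (described in the context) run on input $w$ returns TRUE if and only if $w \in L_{\mathrm{UNIQ}}$, i.e. if and only if $w$ is uniquely decodable from its bigrams.
   Context: Let $\$ \notin \Sigma$ be a delimiter symbol and $\Sigma_\$ = \Sigma \cup \{\$\}$. For a string $x \in \$\Sigma^*\$$, its bigram vector $\Phi(x) \in \mathbb{N}^{\Sigma_\$^2}$ records, for each pair $(c,d) \in \Sigma_\$^2$, the number of indices $j$ with $x[j]x[j+1] = cd$ (occurrences as a contiguous substring, counting overlaps). A string $w \in \Sigma^*$ is uniquely decodable, written $w \in L_{\mathrm{UNIQ}}$, if the only string $x \in \$\Sigma^*\$$ with $\Phi(x) = \Phi(\$w\$)$ is $x = \$w\$$. Algorithm A (input $w \in \Sigma^*$ of length $n$). It maintains: a ''visited'' flag for each $v \in \Sigma$; an ''on a cycle'' flag for each $v \in \Sigma$; and a directed graph $G$ with vertex set $\Sigma$ in which each ordered pair is either an edge or not. Initially no letter is visited, no letter is on a cycle, and $G$ has no edges. Mark $w[1]$ as visited. Then for $i = 2, \dots, n$: (1) If $w[i]$ has not been visited, mark it as visited. Otherwise, if the edge $w[i-1] \to w[i]$ is not already in $G$: if $w[i]$ is marked as on a cycle, return FALSE; otherwise mark $w[i]$ and all letters $w[j]$ for $j$ strictly between the previous occurrence of $w[i]$ (the largest $j_0 < i$ with $w[j_0] = w[i]$) and $i$ as on a cycle. (If the edge $w[i-1] \to w[i]$ is already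 in $G$, do nothing in this step.) (2) If there exist two distinct vertices $a, b \in \Sigma$ such that $a \to w[i]$ and $b \to w[i]$ are edges of $G$ and $a, b$ lie in the same strongly connected component of $G$ (where $a = w[i]$ or $b = w[i]$ is allowed), return FALSE. (3) Add the edge $w[i-1] \to w[i]$ to $G$. After the loop, return TRUE. *)

(* Defs.v *)
From mathcomp Require Import all_boot.
Set Implicit Arguments. Unset Strict Implicit. Unset Printing Implicit Defensive.

Section Bigrams.
Variable S : finType.

(* The delimiter-extended alphabet Sigma_$ is [option S]; [None] is $. *)
Definition delim (w : seq S) : seq (option S) := None :: rcons (map Some w) None.

Definition in_delim (x : seq (option S)) : Prop := exists u : seq S, x = delim u.

Definition bigram (x : seq (option S)) : {ffun option S * option S -> nat} :=
  [ffun cd => count (pred1 cd) (zip x (behead x))].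

Definition uniquely_decodable (w : seq S) : Prop :=
  forall x : seq (option S), in_delim x -> bigram x = bigram (delim w) -> x = delim w.

(* Algorithm A.  State: visited, on-cycle flags (as sets), graph G (edge set),
   processed prefix p = w[1..i-1] (nonempty). *)
Definition edge (G : {set S * S}) : rel S := fun a b => (a, b) \in G.

Fixpoint algA_loop (visited oncyc : {set S}) (G : {set S * S}) (p : seq S)
  (rest : seq S) : bool :=
  match rest with
  | [::] => true
  | c :: rest' =>
    let l := last c p in
    let step1 : option ({set S} * {set S}) :=
      if c \notin visited then Some (c |: visited, oncyc)
      else if (l, c) \notin G then
        if c \in oncyc then None
        else
          (* letters w[j] with j strictly between the previous occurrence of c and i *)
          let between := take (index c (rev p)) (rev p) in
          Some (visited, c |: (oncyc :|: [set y | y \in between]))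
      else Some (visited, oncyc) in
    match step1 with
    | None => false
    | Some (visited', oncyc') =>
      if [exists a : S, exists b : S,
            [&& a != b, edge G a c, edge G b c,
                connect (edge G) a b & connect (edge G) b a]]
      then false
      else
        algA_loop visited' oncyc' ((l, c) |: G) (rcons p c) rest'
    end
  end.

Definition algA (w : seq S) : bool :=
  match w with
  | [::] => true
  | x :: s => algA_loop [set x] set0 set0 [:: x] s
  end.

End Bigrams.

(* Main.v *)
Require Import Defs.
From mathcomp Require Import all_boot.
From mathcomp Require Import zify.
Set Implicit Arguments. Unset Strict Implicit. Unset Printing Implicit Defensive.

Section Gen.
Variable T0 : eqType.
Definition Z (h : T0) (s : seq T0) := zip (h :: s) s.

Lemma Z_cons h x s : Z h (x :: s) = (h, x) :: Z x s.
Proof. by []. Qed.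

Lemma Z_cat h s t : Z h (s ++ t) = Z h s ++ Z (last h s) t.
Proof. by elim: s h => [|x s IH] h //=; rewrite !Z_cons IH. Qed.

Lemma Z_rcons h s x : Z h (rcons s x) = rcons (Z h s) (last h s, x).
Proof. by rewrite -!cats1 Z_cat. Qed.

Lemma mem_Z h s a b : (a, b) \in Z h s -> a \in h :: s /\ b \in s.
Proof.
elim: s h => [|x s IH] h //=; rewrite Z_cons inE => /orP[/eqP[-> ->]|/IH [H1 H2]].
  by rewrite !inE !eqxx ?orbT.
by move: H1 H2; rewrite !inE => -> ->; rewrite !orbT.
Qed.

Lemma split_mem (x : T0) s : x \in s -> exists s1 s2, s = s1 ++ x :: s2.
Proof. by case/splitPr => s1 s2; exists s1, s2. Qed.

Lemma Z_split h s a b : (a, b) \in Z h s ->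
  exists s1 s2, h :: s = s1 ++ a :: b :: s2.
Proof.
elim: s h => [|x s IH] h //=; rewrite Z_cons inE => /orP[/eqP[-> ->]|/IH [s1 [s2 E]]].
  by exists [::], s.
by exists (h :: s1), s2; rewrite E.
Qed.

Lemma swapZ (h z k : T0) P X Y K' T' : last k K' = z ->
  perm_eq (Z h (P ++ z :: X ++ k :: K' ++ Y ++ k :: T'))
          (Z h (P ++ z :: Y ++ k :: K' ++ X ++ k :: T')).
Proof.
move=> hK.
rewrite !Z_cat !Z_cons /= !Z_cat !Z_cons !Z_cat hK !Z_cons.
apply/permP => f; do 4 (rewrite ?count_cat /=); lia.
Qed.
End Gen.

Lemma connect_closed (T : finType) (e : rel T) (P : pred T) :
  (forall y z, P y -> e y z -> P z) -> forall x y, P x -> connect e x y -> P y.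
Proof.
move=> H x y Px /connectP [s pth ->]; elim: s x Px pth => //= z s IH x Px /andP[exz pth].
exact: IH (H _ _ Px exz) pth.
Qed.

Lemma walk_connect (T : finType) (e : rel T) h s :
  (forall a b, (a, b) \in Z h s -> e a b) -> forall x, x \in h :: s -> connect e x (last h s).
Proof.
elim: s h => [|y s IH] h He x /=.
  by rewrite inE => /eqP ->.
have He' : forall a b, (a, b) \in Z y s -> e a b.
  by move=> a b H; apply: He; rewrite Z_cons inE H orbT.
rewrite inE => /orP[/eqP ->|Hx]; last exact: IH.
apply: connect_trans (IH _ He' y (mem_head _ _)).
by apply: connect1; apply: He; rewrite Z_cons mem_head.
Qed.
Section S2.
Variable S : finType.
Definition sp (x : S * S) : option S * option S := (Some x.1, Some x.2).
Definition D (u : seq S) := zip (delim u) (behead (delim u)).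
Definition ip (u : seq S) := zip u (behead u).
Definition Uq (u : seq S) := forall v, perm_eq (D v) (D u) -> v = u.

Lemma ZSome (h : S) t : Z (Some h) (rcons (map Some t) None) =
  rcons (map sp (Z h t)) (Some (last h t), None).
Proof. by elim: t h => [|x t IH] h //=; rewrite Z_cons IH. Qed.

Lemma Dcons (h : S) t : D (h :: t) =
  (None, Some h) :: rcons (map sp (Z h t)) (Some (last h t), None).
Proof. by rewrite /D /delim /= -ZSome. Qed.

Lemma Dnil : D [::] = [:: (None, None)].
Proof. by []. Qed.

Lemma size_Z (T0 : eqType) (h : T0) t : size (Z h t) = size t.
Proof. by rewrite /Z size_zip /=; lia. Qed.

Lemma size_D u : size (D u) = (size u).+1.
Proof. by case: u => [|h t] //; rewrite Dcons /= size_rcons size_map size_Z. Qed.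

Lemma delim_inj : injective (@delim S).
Proof.
move=> u v; rewrite /delim => -[] /rcons_inj [] H; apply: (inj_map _ H) => x y [] //.
Qed.

Lemma UqE u : uniquely_decodable u <-> Uq u.
Proof.
split.
  move=> H v Hp; apply: delim_inj; apply: H; first by exists v.
  by apply/ffunP => x; rewrite !ffunE; exact: (permP Hp).
move=> H x [v ->] Hb; congr delim; apply: H.
rewrite /perm_eq; apply/allP => y _ /=.
have := congr1 (fun f : {ffun _ -> nat} => f y) Hb; rewrite /bigram !ffunE => ->; by [].
Qed.
End S2.
Section S3.
Variable S : finType.
Implicit Types (p A B : seq S) (G : {set S * S}).

Lemma memC (T0 : eqType) (x : T0) s : (x \in s) = (0 < count_mem x s).
Proof. by rewrite -has_pred1 has_count. Qed.

Lemma ip_rcons p c : p != [::] -> ip (rcons p c) = rcons (ip p) (last c p, c).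
Proof. by case: p => [|h t] //= _; rewrite /ip /= -/(Z h _) Z_rcons. Qed.

Lemma ip_mid s1 (l c : S) s2 : ip (s1 ++ l :: c :: s2) = ip (rcons s1 l) ++ (l, c) :: Z c s2.
Proof.
case: s1 => [|x s1] //=.
by rewrite /ip /= -/(Z x _) -/(Z x (rcons _ _)) Z_cat Z_rcons Z_cons cat_rcons.
Qed.

Lemma ip_cat_mem A (c : S) B x y : A != [::] -> (x, y) \in ip (A ++ c :: B) ->
  [\/ (x \in A) && (y \in A), (x == last c A) && (y == c) | (x \in c :: B) && (y \in B)].
Proof.
case: A => [|a A] // _; rewrite /= /ip /= -/(Z a _) Z_cat Z_cons mem_cat inE.
case/orP => [/mem_Z [H1 H2]|/orP [/eqP [-> ->]|/mem_Z [H1 H2]]].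
- by apply: Or31; rewrite H1 inE H2 orbT.
- by apply: Or32; rewrite !eqxx.
- by apply: Or33; rewrite H1 H2.
Qed.

Lemma ip_last_mem A (c : S) B : A != [::] -> (last c A, c) \in ip (A ++ c :: B).
Proof.
case: A => [|a A] // _; rewrite /= /ip /= -/(Z a _) Z_cat Z_cons mem_cat inE eqxx.
by rewrite orbT.
Qed.

Lemma ip_sub_right A (c : S) B x : x \in Z c B -> x \in ip (A ++ c :: B).
Proof.
case: A => [|a A] // H; rewrite /= /ip /= -/(Z a _) Z_cat Z_cons mem_cat inE H.
by rewrite !orbT.
Qed.

Lemma ip_sub_left a A (c : S) B x : x \in Z a A -> x \in ip ((a :: A) ++ c :: B).
Proof. by move=> H; rewrite /= /ip /= -/(Z a _) Z_cat mem_cat H. Qed.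

Lemma walk_connect2 (e : rel S) h s :
  (forall a b, (a, b) \in Z h s -> e a b) -> forall x, x \in h :: s -> connect e h x.
Proof.
elim: s h => [|y s IH] h He x /=.
  by rewrite inE => /eqP ->.
have He' : forall a b, (a, b) \in Z y s -> e a b.
  by move=> a b H; apply: He; rewrite Z_cons inE H orbT.
rewrite inE => /orP[/eqP ->|Hx]; first exact: connect0.
apply: connect_trans (IH _ He' x Hx).
by apply: connect1; apply: He; rewrite Z_cons mem_head.
Qed.

Definition marked p (v : S) :=
  exists A B, p = A ++ v :: B /\ exists z, z \in A /\ z \in v :: B.
Definition cyc G (v : S) := exists u, edge G u v /\ connect (edge G) v u.

Lemma marked_rcons p v c : marked p v -> marked (rcons p c) v.
Proof.
move=> [A [B [-> [z [zA zB]]]]]; exists A, (rcons B c); split.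
  by rewrite rcons_cat.
by exists z; split => //; rewrite -rcons_cons mem_rcons inE zB orbT.
Qed.

Lemma edge_new G l c a b : edge ((l, c) |: G) a b = ((a, b) == (l, c)) || edge G a b.
Proof. by rewrite /edge in_setU1. Qed.

Lemma conn_new G l c x y : connect (edge ((l, c) |: G)) x y ->
  connect (edge G) x y \/ connect (edge G) c y.
Proof.
move=> /connectP [s pth ->]; elim: s x pth => [|z s IH] x /=.
  by move=> _; left; exact: connect0.
move=> /andP [Exz pth]; case: (IH z pth) => [H|]; last by right.
move: Exz; rewrite edge_new => /orP [/eqP [_ Ez]|Exz]; first by right; rewrite -Ez.
by left; apply: connect_trans H; apply: connect1.
Qed.

Lemma cyc_new G l c v : cyc ((l, c) |: G) v ->
  [\/ cyc G v, v = c | connect (edge G) c v].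
Proof.
move=> [u [Euv Cvu]]; move: Euv; rewrite edge_new => /orP [/eqP [_ ->]|Euv].
  by apply: Or32.
case: (conn_new Cvu) => H; first by apply: Or31; exists u.
by apply: Or33; apply: connect_trans H _; apply: connect1.
Qed.

Lemma cyc_same G l c v : (l, c) \in G -> cyc ((l, c) |: G) v -> cyc G v.
Proof.
move=> H; suff -> : (l, c) |: G = G by [].
by apply/setP => x; rewrite in_setU1; case: eqP => // ->.
Qed.
End S3.
Section S4.
Variable S : finType.
Implicit Types (p A B : seq S) (G : {set S * S}).

Lemma DZ u : D u = Z None (rcons (map (@Some S) u) None).
Proof. by []. Qed.

Lemma splice p (c : S) rest A B : p = A ++ c :: B ->
  (exists z, z \in A /\ z \in c :: B) -> last c A != last c B -> ~ Uq (p ++ c :: rest).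
Proof.
move=> -> [z [zA zB]] hne HU.
case/split_mem: zA => A1 [A2 EA]; case/split_mem: zB => B1 [B2 EB].
have [K0 [EK HK]] : exists K0, B1 ++ [:: z] = c :: K0 /\ last c K0 = z.
  case: B1 EB => [|b B1] /= [-> _]; first by exists [::].
  by exists (B1 ++ [:: z]); rewrite last_cat.
set w' := A1 ++ z :: B2 ++ B1 ++ z :: A2.
have Eo : A ++ c :: B = A1 ++ z :: A2 ++ B1 ++ z :: B2 by rewrite EB EA -catA.
have Hp : perm_eq (D (w' ++ c :: rest)) (D ((A ++ c :: B) ++ c :: rest)).
  have E2 : forall X, B1 ++ z :: X = c :: K0 ++ X.
    by move=> X; rewrite -cat1s catA EK.
  rewrite !DZ Eo /w' !E2 -!cats1 !map_cat /= -!catA /=.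
  rewrite !map_cat /= !map_cat /= -!catA /=; have H := (@swapZ _ None (Some z) (Some c) (map Some A1) (map Some B2) (map Some A2) (map Some K0) (map Some rest ++ [:: None])); rewrite -!catA; apply: H.
  by rewrite (last_map Some) HK.
apply/negP: hne; rewrite negbK.
have := HU _ Hp; rewrite Eo => /eqP; rewrite eqseq_cat; last first.
  by rewrite /w' !size_cat /= !size_cat /=; lia.
case/andP => /eqP E _.
have := congr1 (last c) E.
rewrite /w' EA -[last c B]/(last c (c :: B)) EB !last_cat /= !last_cat /= => ->.
by [].
Qed.

End S4.
Section S5.
Variable S : finType.
Implicit Types (p A B : seq S) (G : {set S * S}).

Lemma last_split A (c : S) B x : last x (A ++ c :: B) = last c B.
Proof. by rewrite last_cat. Qed.

Lemma fail1 p (c : S) G (onc : {set S}) rest : G =i ip p ->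
  (forall v, v \in onc -> marked p v) -> c \in onc -> (last c p, c) \notin G ->
  ~ Uq (p ++ c :: rest).
Proof.
move=> HG Hm /Hm [A [B [Ep [z [zA zB]]]]] Hn.
apply: (splice Ep); first by exists z.
apply/eqP => E; move/negP: Hn; apply.
have An : A != [::] by case: (A) zA.
by rewrite HG Ep last_split -E ip_last_mem.
Qed.

Lemma fail2_key p (c : S) G rest d e : p != [::] -> G =i ip p ->
  d != last c p -> e != d -> edge G d c -> edge G e c -> connect (edge G) e d ->
  ~ Uq (p ++ c :: rest).
Proof.
case: p => [|h t] // _ HG Hdl Hed Hdc Hec Hcon.
have : (d, c) \in Z h t by rewrite -HG.
case/Z_split => s1 [s2 Ep].
set A := rcons s1 d.
have EpA : h :: t = A ++ c :: s2 by rewrite Ep /A cat_rcons.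
have An : A != [::] by rewrite /A; case: (s1).
have lA : last c A = d by rewrite /A last_rcons.
case: (boolP (has (mem (c :: s2)) A)) => [/hasP [z zA zB]|/hasPn Hdis].
  apply: (splice EpA); first by exists z.
  by rewrite lA -(last_split A c s2 c) -EpA.
exfalso.
have Hcl : forall y z, y \in c :: s2 -> edge G y z -> z \in c :: s2.
  move=> y z Hy; rewrite /edge HG EpA.
  case/(ip_cat_mem An) => /andP [H1 H2].
  - by move: (Hdis _ H1); rewrite /= Hy.
  - by rewrite (eqP H2) mem_head.
  - by rewrite inE H2 orbT.
have He : e \in c :: s2.
  move: Hec; rewrite /edge HG EpA; case/(ip_cat_mem An) => /andP [H1 H2].
  - by case/negP: (Hdis _ H2); exact: mem_head.
  - by move: Hed; rewrite (eqP H1) lA eqxx.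
  - exact: H1.
have Hd := connect_closed Hcl He Hcon.
have : d \in A by rewrite -lA /A last_rcons mem_rcons mem_head.
by move/Hdis => /negP; apply.
Qed.

Lemma fail2 p (c : S) G rest a b : p != [::] -> G =i ip p ->
  a != b -> edge G a c -> edge G b c -> connect (edge G) a b -> connect (edge G) b a ->
  ~ Uq (p ++ c :: rest).
Proof.
move=> Hp HG Hab Ha Hb Cab Cba.
case: (eqVneq a (last c p)) => Hal.
  apply: (fail2_key (d := b) (e := a)) => //; first by rewrite -Hal eq_sym.
apply: (fail2_key (d := a) (e := b)) => //; by rewrite eq_sym.
Qed.
End S5.
Section S6.
Variable S : finType.
Implicit Types (p A B : seq S) (G : {set S * S}).

Lemma cnt_rcons (T0 : eqType) (x y : T0) s : count_mem x (rcons s y) = count_mem x s + (y == x).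
Proof. by rewrite -cats1 count_cat /= addn0. Qed.

Lemma sp_inj : injective (@sp S).
Proof. by move=> [a b] [a' b'] [-> ->]. Qed.

Lemma cntD (h : S) t x : count_mem (sp x) (D (h :: t)) = count_mem x (Z h t).
Proof.
rewrite Dcons /= cnt_rcons count_map.
have -> : (Some (last h t), None) == sp x = false.
  by case: x => a b; apply/negbTE/eqP => -[].
rewrite /= add0n addn0; apply: eq_count => y /=.
by rewrite (inj_eq sp_inj).
Qed.

Lemma step_uniq p (c : S) G : p != [::] -> G =i ip p -> Uq p ->
  ~~ [exists a, exists b, [&& a != b, edge G a c, edge G b c,
        connect (edge G) a b & connect (edge G) b a]] ->
  [\/ c \notin p, (last c p, c) \in G | ((last c p, c) \notin G /\ ~ cyc G c)] ->
  Uq (rcons p c).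
Proof.
case: p => [|h t] // _ HG HU H2 Hcase v Hp.
rewrite /= in Hcase; set l := last h t in Hcase.
have Hsz := perm_size Hp; rewrite !size_D size_rcons /= in Hsz.
case: v Hp Hsz => [|h' t'] Hp Hsz; first by [].
have Hm : (Some (last h' t'), None) \in D (rcons (h :: t) c).
  by rewrite -(perm_mem Hp) Dcons in_cons mem_rcons mem_head orbT.
have Ec : last h' t' = c.
  move: Hm; rewrite rcons_cons Dcons last_rcons in_cons /= mem_rcons in_cons.
  case/orP => [/eqP [] //|]; case/mapP => x _ [] //.
clear Hm; case/lastP: t' Hp Hsz Ec => [|t0 c'] Hp Hsz; first by move=> _; rewrite /= in Hsz.
rewrite last_rcons => Ec; subst c'.
set d := last h' t0.
have Hc : forall x, count_mem x (rcons (Z h' t0) (d, c)) = count_mem x (rcons (Z h t) (l, c)).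
  move=> x; have := permP Hp (pred1 (sp x)).
  by rewrite rcons_cons !cntD !Z_rcons.
case: (eqVneq d l) => Hdl.
  suff E : h' :: t0 = h :: t by case: E => -> ->.
  apply: HU; apply/permP => f; have := permP Hp f.
  rewrite rcons_cons !Dcons !last_rcons !Z_rcons -/d -/l Hdl.
  rewrite !map_rcons -!cats1 /= !count_cat /=; lia.
have HG' : forall x, (x \in G) = (x \in Z h t) by move=> x; rewrite HG.
have Hdc : (d, c) \in Z h t.
  have := Hc (d, c); rewrite !cnt_rcons eqxx.
  have -> : ((l, c) == (d, c)) = false by apply/eqP => -[E]; move: Hdl; rewrite E eqxx.
  by rewrite addn0 memC => <-; rewrite addn1.
have Hedge : forall x, x \in Z h' t0 -> (x \in Z h t) || (x == (l, c)).
  move=> x Hx; have := Hc x; rewrite !cnt_rcons.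
  move: Hx; rewrite memC => Hx E.
  case: (eqVneq x (l, c)) => [_|Hn]; first by rewrite orbT.
  have E2 : ((l, c) == x) = false by rewrite eq_sym (negbTE Hn).
  rewrite orbF memC; move: E; rewrite E2; lia.
have Hlc : (l, c) \in Z h' t0.
  have := Hc (l, c); rewrite !cnt_rcons eqxx.
  have -> : ((d, c) == (l, c)) = false by apply/eqP => -[E]; move: Hdl; rewrite E eqxx.
  by rewrite addn0 memC => ->; rewrite addn1.
have cin : c \in h :: t by case/mem_Z: Hdc => _ H; rewrite inE H orbT.
case: Hcase => [|HlcG|[HlcG Hnc]]; first by rewrite cin.
  exfalso; move/negP: H2; apply; apply/existsP; exists l; apply/existsP; exists d.
  rewrite eq_sym Hdl /edge HlcG HG' Hdc /=.
  apply/andP; split.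
    apply: (walk_connect (h := h') (s := t0)); last by case/mem_Z: Hlc.
    move=> a b /Hedge /orP [H|/eqP ->]; last exact: HlcG.
    by rewrite /edge HG'.
  apply: connect_trans (connect1 _) _; first by rewrite /edge HG'; exact: Hdc.
  apply: (walk_connect (h := h) (s := t)); last exact: cin.
  by move=> a b H; rewrite /edge HG'.
exfalso; apply: Hnc; exists d; split; first by rewrite /edge HG'.
have Hcnt1 : count_mem (l, c) (Z h' t0) = 1.
  have := Hc (l, c); rewrite !cnt_rcons eqxx.
  have -> : ((d, c) == (l, c)) = false by apply/eqP => -[E]; move: Hdl; rewrite E eqxx.
  move=> E; move: HlcG; rewrite HG' => /count_memPn Hz; move: E; rewrite Hz /=; lia.
case/Z_split: Hlc => s1 [s2 E].
have Ez : Z h' t0 = ip (rcons s1 l) ++ (l, c) :: Z c s2 by rewrite -ip_mid -E.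
have Hn : (l, c) \notin Z c s2.
  by apply/count_memPn; move: Hcnt1; rewrite Ez count_cat /= eqxx; lia.
have -> : d = last c s2 by rewrite /d -[last h' t0]/(last h' (h' :: t0)) E last_cat.
apply: (walk_connect (h := c) (s := s2)); last exact: mem_head.
move=> a b Hab; have : (a, b) \in Z h' t0 by rewrite Ez mem_cat inE Hab !orbT.
case/Hedge/orP => [H|/eqP E']; first by rewrite /edge HG'.
by move: Hn; rewrite -E' Hab.
Qed.
End S6.
Section S7.
Variable S : finType.
Implicit Types (p A B : seq S) (G : {set S * S}) (vis onc : {set S}).

Definition Inv vis onc G p := [/\ p != [::], vis =i p, G =i ip p,
  (forall v, v \in onc -> marked p v) & (forall v, cyc G v -> v \in onc)].

Lemma G_rcons p G (c : S) : p != [::] -> G =i ip p ->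
  (last c p, c) |: G =i ip (rcons p c).
Proof. by move=> Hp HG x; rewrite ip_rcons // in_setU1 mem_rcons in_cons HG. Qed.

Lemma mem_ip1 p a b : (a, b) \in ip p -> a \in p.
Proof. by case: p => [|h t] // /mem_Z []. Qed.

Lemma lastocc p (c : S) : c \in p -> exists A' S', p = A' ++ c :: S' /\
  forall y, (y \in take (index c (rev p)) (rev p)) = (y \in S').
Proof.
move=> Hc; set r := rev p; set k := index c r.
have Hk : k < size r by rewrite index_mem mem_rev.
have Hr : r = take k r ++ c :: drop k.+1 r.
  by rewrite -{1}(cat_take_drop k r) (drop_nth c Hk) nth_index // mem_rev.
exists (rev (drop k.+1 r)), (rev (take k r)); split.
  by rewrite -[p]revK -/r {1}Hr rev_cat rev_cons cat_rcons.
by move=> y; rewrite mem_rev.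
Qed.

Lemma reach p G (c : S) A' S' v : ~ cyc G c -> G =i ip p -> p = A' ++ c :: S' ->
  connect (edge G) c v -> v \in c :: S'.
Proof.
move=> Hnc HG Ep; apply: (connect_closed (P := fun x => x \in c :: S')) (mem_head _ _) => y z /= Hy.
rewrite /edge HG Ep.
case: A' Ep => [|a A] Ep.
  by case/mem_Z => _ H; rewrite inE H orbT.
case/(ip_cat_mem (A := a :: A)) => // /andP [H1 H2].
- exfalso; apply: Hnc; exists (last c (a :: A)); split.
    by rewrite /edge HG Ep ip_last_mem.
  apply: connect_trans (walk_connect2 (h := c) (s := S') _ Hy) _.
    by move=> x1 x2 Hx; rewrite /edge HG Ep ip_sub_right.
  rewrite /=; apply: (walk_connect (h := a) (s := A)) H1.
  by move=> x1 x2 Hx; rewrite /edge HG Ep ip_sub_left.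
- by rewrite (eqP H2) mem_head.
- by rewrite inE H2 orbT.
Qed.

Lemma presA vis onc G p (c : S) : Inv vis onc G p -> c \notin vis ->
  Inv (c |: vis) onc ((last c p, c) |: G) (rcons p c).
Proof.
move=> [Hp Hv HG Hm Hc] Hcv.
have Hcp : c \notin p by rewrite -Hv.
split.
- by case: (p).
- by move=> x; rewrite in_setU1 mem_rcons in_cons Hv.
- exact: G_rcons.
- by move=> v /Hm; apply: marked_rcons.
move=> v [u [Euv Cvu]].
have Hno : forall z, ~~ edge G c z.
  by move=> z; apply/negP; rewrite /edge HG => /mem_ip1; apply/negP.
have Hc0 : forall y, connect (edge G) c y -> y = c.
  move=> y Cy; apply/eqP; apply: (connect_closed (P := fun x => x == c) _ (eqxx c) Cy).
  by move=> y' z /= /eqP ->; rewrite (negbTE (Hno z)).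
have Hlc : last c p != c.
  apply/eqP => E; move/negP: Hcp; apply; case: (p) Hp E => [|h t] //= _ <-.
  exact: mem_last.
move: Euv; rewrite edge_new => /orP [/eqP [Eu Ev]|Euv].
  subst u v; case: (conn_new Cvu) => /Hc0 E; by move: Hlc; rewrite E eqxx.
case: (conn_new Cvu) => H; first by apply: Hc; exists u.
by move: (Hno v); rewrite -(Hc0 _ H) Euv.
Qed.

Lemma presB vis onc G p (c : S) : Inv vis onc G p -> c \in vis -> (last c p, c) \in G ->
  Inv vis onc ((last c p, c) |: G) (rcons p c).
Proof.
move=> [Hp Hv HG Hm Hc] Hcv HlG.
split.
- by case: (p).
- by move=> x; rewrite mem_rcons in_cons Hv; case: eqP => // ->; rewrite -Hv.
- exact: G_rcons.
- by move=> v /Hm; apply: marked_rcons.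
by move=> v /(cyc_same HlG) /Hc.
Qed.

Lemma presD vis onc G p (c : S) : Inv vis onc G p -> c \in vis ->
  (last c p, c) \notin G -> c \notin onc ->
  Inv vis (c |: (onc :|: [set y | y \in take (index c (rev p)) (rev p)]))
      ((last c p, c) |: G) (rcons p c).
Proof.
move=> [Hp Hv HG Hm Hc] Hcv HlG Hco.
have Hcp : c \in p by rewrite -Hv.
have [A' [S' [Ep Hin]]] := lastocc Hcp.
have Hnc : ~ cyc G c by move/Hc; apply/negP.
split.
- by case: (p).
- by move=> x; rewrite mem_rcons in_cons Hv; case: eqP => // ->; rewrite -Hv.
- exact: G_rcons.
- move=> v; rewrite in_setU1 in_setU inE Hin.
  case/orP => [/eqP ->|/orP [/Hm|Hs]]; last 2 first.
  + exact: marked_rcons.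
  + case/split_mem: Hs => S1 [S2 ES].
    exists (A' ++ c :: S1), (rcons S2 c); split.
      by rewrite Ep ES rcons_cat rcons_cons rcons_cat -catA.
    by exists c; split; rewrite ?mem_cat ?mem_head ?orbT // -rcons_cons mem_rcons mem_head.
  + exists p, [::]; split; first by rewrite cats1.
    by exists c; split; rewrite ?mem_head.
move=> v; case/cyc_new => [H|->|H].
- by rewrite in_setU1 in_setU Hc ?orbT.
- by rewrite in_setU1 eqxx.
- have := reach Hnc HG Ep H; rewrite in_cons => /orP [/eqP ->|Hs].
    by rewrite in_setU1 eqxx.
  by rewrite in_setU1 in_setU inE Hin Hs !orbT.
Qed.
End S7.
Section S8.
Variable S : finType.
Implicit Types (p A B : seq S) (G : {set S * S}) (vis onc : {set S}).

Lemma loop_false rest : forall vis onc G p, Inv vis onc G p ->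
  algA_loop vis onc G p rest = false -> ~ Uq (p ++ rest).
Proof.
elim: rest => [|c rest IH] vis onc G p Hinv //=.
have [Hp Hv HG Hm Hc] := Hinv.
have Hstep : forall vis' onc', Inv vis' onc' ((last c p, c) |: G) (rcons p c) ->
  (if [exists a, exists b, [&& a != b, edge G a c, edge G b c,
        connect (edge G) a b & connect (edge G) b a]]
   then false else algA_loop vis' onc' ((last c p, c) |: G) (rcons p c) rest) = false ->
  ~ Uq (p ++ c :: rest).
  move=> vis' onc' Hinv'; case: ifP => [/existsP [a /existsP [b /and5P [H1 H2 H3 H4 H5]]] _|_ H].
    exact: (fail2 (rest := rest) Hp HG H1 H2 H3 H4 H5).
  by rewrite -cat_rcons; apply: IH H.
case: (boolP (c \in vis)) => Hcv /=; last by apply: Hstep; apply: presA.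
case: (boolP ((last c p, c) \in G)) => HlG /=.
  by apply: Hstep; apply: presB.
case: (boolP (c \in onc)) => Hco /=.
  by move=> _; apply: (fail1 (rest := rest) HG Hm Hco HlG).
by apply: Hstep; apply: presD.
Qed.

Lemma loop_true rest : forall vis onc G p, Inv vis onc G p -> Uq p ->
  algA_loop vis onc G p rest = true -> Uq (p ++ rest).
Proof.
elim: rest => [|c rest IH] vis onc G p Hinv HU /=; first by rewrite cats0.
have [Hp Hv HG Hm Hc] := Hinv.
have Hstep : forall vis' onc', Inv vis' onc' ((last c p, c) |: G) (rcons p c) ->
  [\/ c \notin p, (last c p, c) \in G | ((last c p, c) \notin G /\ ~ cyc G c)] ->
  (if [exists a, exists b, [&& a != b, edge G a c, edge G b c,
        connect (edge G) a b & connect (edge G) b a]]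
   then false else algA_loop vis' onc' ((last c p, c) |: G) (rcons p c) rest) = true ->
  Uq (p ++ c :: rest).
  move=> vis' onc' Hinv' Hcase; case: ifP => // /negbT H2 H.
  rewrite -cat_rcons; apply: IH H => //.
  exact: step_uniq.
case: (boolP (c \in vis)) => Hcv /=.
  case: (boolP ((last c p, c) \in G)) => HlG /=.
    by apply: Hstep; [apply: presB | apply: Or32].
  case: (boolP (c \in onc)) => Hco //=.
  apply: Hstep; first exact: presD.
  by apply: Or33; split => // /Hc; apply/negP.
by apply: Hstep; [apply: presA | apply: Or31; rewrite -Hv].
Qed.
End S8.

Unset Implicit Arguments.
Theorem theorem2 (S : finType) (w : seq S) :
  0 < size w -> (algA w = true <-> uniquely_decodable w).
Proof.
case: w => [|x s] // _.
have Hinv : Inv [set x] set0 set0 [:: x].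
  split => //.
  - by move=> y; rewrite !inE.
  - by move=> y; rewrite inE.
  - by move=> v; rewrite inE.
  - by move=> v [u [H _]]; move: H; rewrite /edge inE.
have HU : Uq [:: x].
  move=> v Hp; have := perm_size Hp; rewrite !size_D.
  case: v Hp => [|y [|z t]] //= Hp _.
  have : (None, Some y) \in D [:: x] by rewrite -(perm_mem Hp) Dcons mem_head.
  by rewrite Dcons !inE => /orP [/eqP [->]|/eqP].
rewrite UqE /algA; split.
  by move=> H; apply: (loop_true Hinv HU H).
move=> H; case E : (algA_loop _ _ _ _ _) => //.
by case: (loop_false Hinv E).
Qed.
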